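(* Let $A,B,C,D,E,F$ be six points on a rectangular hyperbola $\mathcal{H}$. Suppose that the triangles $ABC$ and $DEF$ are orthologic, and that one of the two orthology centers lies on $\mathcal{H}$. Then the other orthology center also lies on $\mathcal{H}$.
   Context: A rectangular hyperbola is a hyperbola with perpendicular asymptotes. Triangles $ABC$ and $DEF$ are orthologic if the perpendiculars from $D,E,F$ to $BC, CA, AB$ respectively are concurrent; in that case the perpendiculars from $A,B,C$ to $EF, FD, DE$ respectively are also concurrent. The two points of concurrency are called the orthology centers. *)

(* Defs.v *)
From mathcomp Require Import all_boot all_order all_algebra.
Set Implicit Arguments. Unset Strict Implicit. Unset Printing Implicit Defensive.
Import Order.TTheory GRing.Theory Num.Theory.
Local Open Scope ring_scope.

Section Geo.
Variable R : realFieldType.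

Definition dot (u v : R * R) : R := u.1 * v.1 + u.2 * v.2.
Definition vsub (u v : R * R) : R * R := (u.1 - v.1, u.2 - v.2).

Definition collinear (A B C : R * R) : Prop :=
  (B.1 - A.1) * (C.2 - A.2) - (B.2 - A.2) * (C.1 - A.1) = 0.

Definition on_conic (a b c d e f : R) (P : R * R) : Prop :=
  a * P.1 ^+ 2 + b * P.1 * P.2 + c * P.2 ^+ 2 + d * P.1 + e * P.2 + f = 0.

(* determinant of the symmetric matrix
   [[a, b/2, d/2]; [b/2, c, e/2]; [d/2, e/2, f]] *)
Definition conic_det (a b c d e f : R) : R :=
  a * (c * f - (e / 2) ^+ 2) - (b / 2) * ((b / 2) * f - (e / 2) * (d / 2))
  + (d / 2) * ((b / 2) * (e / 2) - c * (d / 2)).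

(* a (non-degenerate) hyperbola whose asymptotes are perpendicular *)
Definition rect_hyperbola (a b c d e f : R) : Prop :=
  [/\ conic_det a b c d e f != 0, b ^+ 2 - 4 * a * c > 0 & a + c = 0].

Definition orthology_center (A B C D E F P : R * R) : Prop :=
  [/\ dot (vsub P D) (vsub C B) = 0,
      dot (vsub P E) (vsub A C) = 0 &
      dot (vsub P F) (vsub B A) = 0].
End Geo.

(* Main.v *)
Require Import Defs.
From Stdlib Require Import NsatzTactic.
From mathcomp Require Import all_boot all_order all_algebra.
From mathcomp Require Import ring.
Import Order.TTheory GRing.Theory Num.Theory.
Local Open Scope ring_scope.

Section NS.
Variable R : realFieldType.
#[local] Instance mcops : (@Ncring.Ring_ops R 0 1 (@GRing.add R) (@GRing.mul R) (fun x y => x - y) (@GRing.opp R) (@eq R)) := {}.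
Ltac unf := rewrite /equality /addition /multiplication /subtraction /opposite /zero /one
   /Ncring.eq_notation /Ncring.add_notation /Ncring.mul_notation /Ncring.sub_notation
   /Ncring.opp_notation /Ncring.zero_notation /Ncring.one_notation /=.
#[local] Instance mcring : (Ncring.Ring (Ro:=mcops)).
Proof.
constructor; try exact eq_equivalence; try (by move=> ? ? -> ? ? ->); try (by move=> ? ? ->).
all: intros; unf.
all: by rewrite ?add0r ?addrA ?mul1r ?mulr1 ?mulrA ?mulrDl ?mulrDr ?subrr /= 1?addrC.
Qed.
#[local] Instance mccring : (Cring.Cring (Rr:=mcring)).
Proof. move=> x y; unf; exact: mulrC. Qed.
#[local] Instance mcdom : (Integral_domain.Integral_domain (Rcr:=mccring)).
Proof. constructor.
- move=> x y; unf => /eqP; rewrite mulf_eq0 => /orP[] /eqP; auto.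
- unf; apply/eqP; exact: oner_neq0.
Qed.

Lemma core (a b d e f a1 a2 b1 b2 c1 c2 d1 d2 e1 e2 f1 f2 p1 p2 q1 q2 : R) :
  a*a1*a1 + b*a1*a2 - a*a2*a2 + d*a1 + e*a2 + f = 0 ->
  a*b1*b1 + b*b1*b2 - a*b2*b2 + d*b1 + e*b2 + f = 0 ->
  a*c1*c1 + b*c1*c2 - a*c2*c2 + d*c1 + e*c2 + f = 0 ->
  a*d1*d1 + b*d1*d2 - a*d2*d2 + d*d1 + e*d2 + f = 0 ->
  a*e1*e1 + b*e1*e2 - a*e2*e2 + d*e1 + e*e2 + f = 0 ->
  a*f1*f1 + b*f1*f2 - a*f2*f2 + d*f1 + e*f2 + f = 0 ->
  (p1-d1)*(c1-b1) + (p2-d2)*(c2-b2) = 0 ->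
  (p1-e1)*(a1-c1) + (p2-e2)*(a2-c2) = 0 ->
  (p1-f1)*(b1-a1) + (p2-f2)*(b2-a2) = 0 ->
  (q1-a1)*(f1-e1) + (q2-a2)*(f2-e2) = 0 ->
  (q1-b1)*(d1-f1) + (q2-b2)*(d2-f2) = 0 ->
  (q1-c1)*(e1-d1) + (q2-c2)*(e2-d2) = 0 ->
  (a* p1* p1 + b* p1* p2 - a* p2* p2 + d* p1 + e* p2 + f) * ((b1-a1)*(c2-a2) - (b2-a2)*(c1-a1)) +
  (a*q1*q1 + b*q1*q2 - a*q2*q2 + d*q1 + e*q2 + f) * ((e1-d1)*(f2-d2)-(e2-d2)*(f1-d1)) = 0.
Proof.
move=> H1 H2 H3 H4 H5 H6 H7 H8 H9 H10 H11 H12.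
nsatz.
Qed.
End NS.

Theorem proposition2p6 (R : realFieldType) (a b c d e f : R)
    (A B C D E F P Q : R * R) :
  rect_hyperbola a b c d e f ->
  on_conic a b c d e f A -> on_conic a b c d e f B -> on_conic a b c d e f C ->
  on_conic a b c d e f D -> on_conic a b c d e f E -> on_conic a b c d e f F ->
  ~ collinear A B C -> ~ collinear D E F ->
  orthology_center A B C D E F P ->
  orthology_center D E F A B C Q ->
  (on_conic a b c d e f P <-> on_conic a b c d e f Q).
Proof.
case=> _ _ hac.
have hc : c = - a by apply/eqP; rewrite -subr_eq0 opprK addrC hac.
subst c.
case: A => a1 a2; case: B => b1 b2; case: C => c1 c2; case: D => d1 d2.
case: E => e1 e2; case: F => f1 f2; case: P => p1 p2; case: Q => q1 q2.
rewrite /on_conic /collinear /orthology_center /dot /vsub /= !expr2.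
have E2 : forall x y : R, a * (x * x) + b * x * y + - a * (y * y) + d * x + e * y + f
   = a*x*x + b*x*y - a*y*y + d*x + e*y + f.
  by move=> x y; ring.
rewrite !E2 => h1 h2 h3 h4 h5 h6 n1 n2 [o1 o2 o3] [o4 o5 o6].
have := @core R _ _ _ _ _ _ _ _ _ _ _ _ _ _ _ _ _ _ _ _ _ h1 h2 h3 h4 h5 h6 o1 o2 o3 o4 o5 o6.
move: n1 n2.
set SP := (a * p1 * p1 + _); set SQ := (a * q1 * q1 + _).
set X := (_ - _ * _); set Y := (_ - _ * _) => n1 n2 H.
split => HS.
- move: H; rewrite HS mul0r add0r => /eqP; rewrite mulf_eq0 => /orP[/eqP //|/eqP //].
- move: H; rewrite HS mul0r addr0 => /eqP; rewrite mulf_eq0 => /orP[/eqP //|/eqP //].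
Qed.
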